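(* Let $\varphi$ be a forecasting system and $\mathscr S$ a countable set of selection processes. Then the event $\{\omega\in\Omega:\omega\text{ is }\mathscr S\text{-random for }\varphi\}$ is almost sure for $\varphi$.
   Context: $\mathbb N_0=\{0,1,2,\dots\}$. $\Omega=\{0,1\}^{\mathbb N}$ is the set of paths $\omega=(\omega_1,\omega_2,\dots)$, $\omega_{1:n}=(\omega_1,\dots,\omega_n)$, $\omega_{1:0}=\square$ the empty sequence; $\mathbb S=\bigcup_{n\ge0}\{0,1\}^n$ the set of situations; $sx$ concatenation. For $r\in[0,1]$ and $f:\{0,1\}\to\mathbb R$, $E_r(f)=rf(1)+(1-r)f(0)$; for a closed interval $I\subseteq[0,1]$, $\overline E_I(f)=\max_{r\in I}E_r(f)$, $\underline E_I(f)=\min_{r\in I}E_r(f)$. A forecasting system is a map $\varphi$ from $\mathbb S$ to closed subintervals of $[0,1]$, with $\underline\varphi(s)=\min\varphi(s)$, $\overline\varphi(s)=\max\varphi(s)$. For a real process $M:\mathbb S\to\mathbb R$, $\Delta M(s)$ is $x\mapsto M(sx)-M(s)$; $M$ is a supermartingale for $\varphi$ if $\overline E_{\varphi(s)}(\Delta M(s))\le0$ for all $s$, a submartingale if $\underline E_{\varphi(s)}(\Delta M(s))\ge0$ for all $s$. For bounded $f:\Omega\to\mathbb R$, $\underline E^\varphi(f)=\sup\{M(\square): M$ submartingale for $\varphi$, $\limsup_nM(\omega_{1:n})\le f(\omega)\ \forall\omega\}$. An event $A\subseteq\Omega$ is almost sure for $\varphi$ if $\underline E^\varphi(\mathbb 1_A)=1$.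 A selection process is a map $S:\mathbb S\to\{0,1\}$. For a countable set $\mathscr S$ of selection processes, $\omega$ is $\mathscr S$-random for $\varphi$ if for every $S\in\mathscr S$ with $\lim_n\sum_{k=0}^{n-1}S(\omega_{1:k})=\infty$: $\liminf_n\frac{\sum_{k=0}^{n-1}S(\omega_{1:k})[\omega_{k+1}-\underline\varphi(\omega_{1:k})]}{\sum_{k=0}^{n-1}S(\omega_{1:k})}\ge0$ and $\limsup_n\frac{\sum_{k=0}^{n-1}S(\omega_{1:k})[\omega_{k+1}-\overline\varphi(\omega_{1:k})]}{\sum_{k=0}^{n-1}S(\omega_{1:k})}\le0$. *)

(* Defs.v *)
From Stdlib Require Import Reals List ClassicalEpsilon.
From Coquelicot Require Import Coquelicot.
Open Scope R_scope.

Definition sit := list bool.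

(* Paths omega = (omega_1, omega_2, ...), encoded 0-indexed: omega_{k+1} = w k. *)
Definition path := nat -> bool.

Definition prefix (w : path) (n : nat) : sit := map w (seq 0 n).

Definition b2R (b : bool) : R := if b then 1 else 0.

Record forecasting_system := {
  lo : sit -> R;
  hi : sit -> R;
  lo_ge0 : forall s, 0 <= lo s;
  lo_le_hi : forall s, lo s <= hi s;
  hi_le1 : forall s, hi s <= 1
}.

Definition E_r (r : R) (f : bool -> R) : R := r * f true + (1 - r) * f false.

Definition DeltaM (M : sit -> R) (s : sit) : bool -> R :=
  fun x => M (s ++ x :: nil) - M s.

(* Upper expectation over phi(s) is <= 0, i.e. max_{r in phi(s)} E_r(...) <= 0 *)
Definition supermartingale (phi : forecasting_system) (M : sit -> R) : Prop :=
  forall s r, lo phi s <= r <= hi phi s -> E_r r (DeltaM M s) <= 0.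

(* Lower expectation over phi(s) is >= 0, i.e. min_{r in phi(s)} E_r(...) >= 0 *)
Definition submartingale (phi : forecasting_system) (M : sit -> R) : Prop :=
  forall s r, lo phi s <= r <= hi phi s -> 0 <= E_r r (DeltaM M s).

Definition lower_exp (phi : forecasting_system) (f : path -> R) : Rbar :=
  Lub_Rbar (fun v => exists M : sit -> R,
     submartingale phi M /\
     (forall w, Rbar_le (LimSup_seq (fun n => M (prefix w n))) (Finite (f w))) /\
     v = M nil).

Definition indicator (A : path -> Prop) (w : path) : R :=
  if excluded_middle_informative (A w) then 1 else 0.

Definition almost_sure (phi : forecasting_system) (A : path -> Prop) : Prop :=
  lower_exp phi (indicator A) = Finite 1.

Definition selection_process := sit -> bool.

Fixpoint rsum (a : nat -> R) (n : nat) : R :=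
  match n with O => 0 | S m => rsum a m + a m end.

Definition countable_set (P : selection_process -> Prop) : Prop :=
  exists e : nat -> option selection_process,
    forall S, P S -> exists n, e n = Some S.

Definition S_random (P : selection_process -> Prop) (phi : forecasting_system)
    (w : path) : Prop :=
  forall S : selection_process, P S ->
    is_lim_seq (fun n => rsum (fun k => b2R (S (prefix w k))) n) p_infty ->
    Rbar_le (Finite 0)
      (LimInf_seq (fun n =>
         rsum (fun k => b2R (S (prefix w k)) * (b2R (w k) - lo phi (prefix w k))) n
         / rsum (fun k => b2R (S (prefix w k))) n)) /\
    Rbar_le
      (LimSup_seq (fun n =>
         rsum (fun k => b2R (S (prefix w k)) * (b2R (w k) - hi phi (prefix w k))) n
         / rsum (fun k => b2R (S (prefix w k))) n)) (Finite 0).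

(* Main.v *)
Require Import Defs.
From Stdlib Require Import Reals Lra Lia List Cantor ClassicalEpsilon Classical.
From Coquelicot Require Import Coquelicot.
Open Scope R_scope.

Fixpoint prodr (g : sit -> bool -> R) (l : list bool) : R :=
  match l with nil => 1 | x :: l' => prodr g l' * g (rev l') x end.
Definition prodM g (s : sit) := prodr g (rev s).

Lemma prodM_snoc g s x : prodM g (s ++ x :: nil) = prodM g s * g s x.
Proof. unfold prodM. rewrite rev_unit. simpl. rewrite rev_involutive. reflexivity. Qed.

Lemma prefix_S w n : prefix w (S n) = prefix w n ++ w n :: nil.
Proof. unfold prefix. rewrite seq_S, map_app. reflexivity. Qed.

Lemma E_r_DeltaM r M s : E_r r (DeltaM M s) =
  r * M (s ++ true::nil) + (1-r) * M (s ++ false::nil) - M s.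
Proof. unfold E_r, DeltaM; ring. Qed.

Lemma prodr_nonneg g : (forall s x, 0 <= g s x) -> forall l, 0 <= prodr g l.
Proof. intros Hg l. induction l; simpl. lra. apply Rmult_le_pos; auto. Qed.

Lemma prodM_nonneg g : (forall s x, 0 <= g s x) -> forall s, 0 <= prodM g s.
Proof. intros; apply prodr_nonneg; auto. Qed.

Lemma prodM_bound g : (forall s x, 0 <= g s x <= 2) -> forall s, prodM g s <= 2 ^ length s.
Proof.
  intros Hg s. unfold prodM. rewrite <- (length_rev s). generalize (rev s). induction l; simpl. lra.
  assert (0 <= prodr g l) by (apply prodr_nonneg; intros; apply Hg).
  destruct (Hg (rev l) a). nra.
Qed.

Lemma prodM_super phi g : (forall s x, 0 <= g s x) ->
  (forall s r, lo phi s <= r <= hi phi s -> r * g s true + (1-r) * g s false <= 1) ->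
  supermartingale phi (prodM g).
Proof.
  intros Hg Hr s r Hrs. rewrite E_r_DeltaM, !prodM_snoc.
  assert (0 <= prodM g s) by (apply prodM_nonneg; auto).
  specialize (Hr s r Hrs).
  replace (r * (prodM g s * g s true) + (1 - r) * (prodM g s * g s false) - prodM g s)
    with (prodM g s * (r * g s true + (1 - r) * g s false - 1)) by ring.
  nra.
Qed.

Definition sgn (b : bool) : R := if b then 1 else -1.
Definition cfun (phi : forecasting_system) (b : bool) (s : sit) : R :=
  if b then lo phi s else hi phi s.
Definition tfactor phi (Sl : selection_process) (dl : R) (b : bool) (s : sit) (x : bool) : R :=
  1 - sgn b * dl * b2R (Sl s) * (b2R x - cfun phi b s).

Lemma tfactor_bounds phi Sl dl b : 0 < dl <= 1/3 -> forall s x, 0 <= tfactor phi Sl dl b s x <= 2.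
Proof.
  intros Hd s x. unfold tfactor, sgn, cfun.
  pose proof (lo_ge0 phi s). pose proof (lo_le_hi phi s). pose proof (hi_le1 phi s).
  destruct b, (Sl s), x; simpl; split; nra.
Qed.

Lemma tfactor_super phi Sl dl b : 0 < dl <= 1/3 -> supermartingale phi (prodM (tfactor phi Sl dl b)).
Proof.
  intros Hd. apply prodM_super.
  - intros; apply tfactor_bounds; auto.
  - intros s r Hr. unfold tfactor, sgn, cfun.
    destruct b, (Sl s); simpl; nra.
Qed.

Definition selS (e : nat -> option selection_process) n : selection_process :=
  match e n with Some Sl => Sl | None => fun _ => false end.
Definition delta_of (m : nat) : R := / INR (m + 3).

Lemma delta_of_bounds m : 0 < delta_of m <= 1/3.
Proof.
  unfold delta_of. rewrite plus_INR. pose proof (pos_INR m). simpl.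
  split. apply Rinv_0_lt_compat; lra.
  replace (1/3) with (/3) by field. apply Rinv_le_contravar; lra.
Qed.

Definition tparams (i : nat) : nat * nat * bool :=
  (fst (of_nat i), fst (of_nat (snd (of_nat i))), Nat.eqb (snd (of_nat (snd (of_nat i)))) 0).

Definition test phi e (i : nat) : sit -> R :=
  prodM (tfactor phi (selS e (fst (fst (tparams i)))) (delta_of (snd (fst (tparams i)))) (snd (tparams i))).

Lemma test_surj phi e n m b : exists i,
  test phi e i = prodM (tfactor phi (selS e n) (delta_of m) b).
Proof.
  exists (to_nat (n, to_nat (m, if b then 0%nat else 1%nat))).
  unfold test, tparams. rewrite cancel_of_to; cbn [fst snd]; rewrite cancel_of_to; cbn [fst snd].
  destruct b; reflexivity.
Qed.

Lemma test_bounds phi e i s : 0 <= test phi e i s <= 2 ^ length s.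
Proof.
  unfold test. split. apply prodM_nonneg. intros; apply tfactor_bounds, delta_of_bounds.
  apply prodM_bound. intros; apply tfactor_bounds, delta_of_bounds.
Qed.

Lemma test_super phi e i : supermartingale phi (test phi e i).
Proof. unfold test. apply tfactor_super, delta_of_bounds. Qed.

Lemma test_nil phi e i : test phi e i nil = 1.
Proof. reflexivity. Qed.
Definition wt (i : nat) : R := /2 * (/2) ^ i.

Lemma wt_pos i : 0 < wt i.
Proof. unfold wt. apply Rmult_lt_0_compat. lra. apply pow_lt; lra. Qed.

Lemma ex_series_wt C : ex_series (fun i => wt i * C).
Proof.
  assert (H : ex_series (fun i => (/2 * C) * ((/2) ^ i))).
  apply (@ex_series_scal_l R_AbsRing R_NormedModule (/2*C) (fun i => (/2)^i)). apply ex_series_geom. rewrite Rabs_pos_eq; lra.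
  revert H. apply ex_series_ext. intros n. unfold wt. change (/2 * C * (/2)^n = /2 * (/2)^n * C). ring.
Qed.

Lemma Series_wt : Series wt = 1.
Proof.
  rewrite (Series_ext wt (fun n => /2 * (/2)^n)) by reflexivity. rewrite Series_scal_l. erewrite is_series_unique; [|apply is_series_geom; rewrite Rabs_pos_eq; lra].
  field.
Qed.

Definition Tsum phi e (s : sit) : R := Series (fun i => wt i * test phi e i s).

Lemma ex_series_T phi e s : ex_series (fun i => wt i * test phi e i s).
Proof.
  apply (@ex_series_le R_AbsRing R_CompleteNormedModule) with (b := fun i => wt i * 2 ^ length s).
  - intros i. change norm with Rabs; simpl. pose proof (test_bounds phi e i s). pose proof (wt_pos i).
    rewrite Rabs_pos_eq by nra. nra.
  - apply ex_series_wt.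
Qed.

Lemma Series_nonpos a : (forall n, a n <= 0) -> ex_series a -> Series a <= 0.
Proof.
  intros Ha Hex.
  assert (Series (fun n => -1 * a n) >= 0).
  { apply Rle_ge. replace 0 with (Series (fun _ => 0)).
    apply Series_le. intros n; specialize (Ha n); lra.
    apply (@ex_series_scal_l R_AbsRing R_NormedModule (-1) a); auto.
    rewrite (Series_ext _ (fun n => 0 * a n)) by (intros; ring). rewrite Series_scal_l. ring. }
  rewrite Series_scal_l in H. lra.
Qed.

Lemma Tsum_nonneg phi e s : 0 <= Tsum phi e s.
Proof.
  unfold Tsum. replace 0 with (Series (fun _ => 0)).
  apply Series_le. intros n; pose proof (test_bounds phi e n s); pose proof (wt_pos n); split; nra.
  apply ex_series_T.
  rewrite (Series_ext _ (fun n => 0 * 0)) by (intros; ring). rewrite Series_scal_l. ring.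
Qed.

Lemma Tsum_nil phi e : Tsum phi e nil = 1.
Proof.
  unfold Tsum. rewrite <- Series_wt. apply Series_ext. intros; rewrite test_nil; ring.
Qed.

Lemma sum_f_ge_term a i : (forall n, 0 <= a n) -> a i <= sum_f_R0 a i.
Proof. intros Ha. destruct i; simpl. lra. pose proof (cond_pos_sum a i Ha). lra. Qed.

Lemma Series_ge_term a i : (forall n, 0 <= a n) -> ex_series a -> a i <= Series a.
Proof.
  intros Ha Hex. rewrite (Series_incr_n a (S i)) by (lia || auto). simpl Nat.pred.
  pose proof (sum_f_ge_term a i Ha).
  assert (0 <= Series (fun k => a (S i + k)%nat)).
  { replace 0 with (Series (fun _ => 0)).
    apply Series_le. intros n; specialize (Ha (S i + n)%nat); lra.
    apply (proj1 (ex_series_incr_n a (S i))); auto.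
    rewrite (Series_ext _ (fun n => 0 * 0)) by (intros; ring). rewrite Series_scal_l. ring. }
  lra.
Qed.

Lemma Tsum_ge phi e i s : wt i * test phi e i s <= Tsum phi e s.
Proof.
  unfold Tsum. apply (Series_ge_term (fun i => wt i * test phi e i s)).
  intros n; pose proof (test_bounds phi e n s); pose proof (wt_pos n); nra.
  apply ex_series_T.
Qed.

Lemma Tsum_super phi e : supermartingale phi (Tsum phi e).
Proof.
  intros s r Hr. rewrite E_r_DeltaM. unfold Tsum.
  rewrite <- !Series_scal_l.
  rewrite <- Series_plus, <- Series_minus.
  - apply Series_nonpos.
    + intros i. pose proof (test_super phi e i s r Hr) as H. rewrite E_r_DeltaM in H.
      pose proof (wt_pos i). nra.
    + apply (@ex_series_minus R_AbsRing R_NormedModule).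
      apply (@ex_series_plus R_AbsRing R_NormedModule).
      apply (@ex_series_scal_l R_AbsRing R_NormedModule r (fun i => wt i * test phi e i (s ++ true :: nil))), ex_series_T.
      apply (@ex_series_scal_l R_AbsRing R_NormedModule (1-r) (fun i => wt i * test phi e i (s ++ false :: nil))), ex_series_T.
      apply ex_series_T.
  - apply (@ex_series_plus R_AbsRing R_NormedModule).
    apply (@ex_series_scal_l R_AbsRing R_NormedModule r (fun i => wt i * test phi e i (s ++ true :: nil))), ex_series_T.
    apply (@ex_series_scal_l R_AbsRing R_NormedModule (1-r) (fun i => wt i * test phi e i (s ++ false :: nil))), ex_series_T.
  - apply ex_series_T.
  - apply (@ex_series_scal_l R_AbsRing R_NormedModule r (fun i => wt i * test phi e i (s ++ true :: nil))), ex_series_T.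
  - apply (@ex_series_scal_l R_AbsRing R_NormedModule (1-r) (fun i => wt i * test phi e i (s ++ false :: nil))), ex_series_T.
Qed.

Fixpoint stopr (T : sit -> R) (K : R) (l : list bool) : R :=
  match l with
  | nil => T nil
  | x :: l' => if Rle_dec K (stopr T K l') then stopr T K l' else T (rev l)
  end.
Definition stopM T K (s : sit) := stopr T K (rev s).

Lemma stopM_snoc T K s x : stopM T K (s ++ x :: nil) =
  if Rle_dec K (stopM T K s) then stopM T K s else T (s ++ x :: nil).
Proof.
  unfold stopM. rewrite rev_unit. simpl. rewrite rev_involutive. reflexivity.
Qed.

Lemma stopM_cases T K s : stopM T K s = T s \/ K <= stopM T K s.
Proof.
  induction s using rev_ind. left; reflexivity.
  rewrite stopM_snoc. destruct Rle_dec; auto.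
Qed.

Lemma stopM_nonneg T K : (forall s, 0 <= T s) -> forall s, 0 <= stopM T K s.
Proof.
  intros HT s. induction s using rev_ind. apply HT.
  rewrite stopM_snoc. destruct Rle_dec; auto.
Qed.

Lemma stopM_super phi T K : supermartingale phi T -> supermartingale phi (stopM T K).
Proof.
  intros HT s r Hr. rewrite E_r_DeltaM, !stopM_snoc.
  destruct Rle_dec as [H|H]. lra.
  destruct (stopM_cases T K s) as [E|E]; [|lra].
  rewrite E. specialize (HT s r Hr). rewrite E_r_DeltaM in HT. lra.
Qed.

Lemma stopM_path T K w n : K <= T (prefix w n) -> forall m, (n <= m)%nat -> K <= stopM T K (prefix w m).
Proof.
  intros HK m Hm. induction Hm.
  - destruct (stopM_cases T K (prefix w n)) as [E|E]; [rewrite E|]; auto.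
  - rewrite prefix_S, stopM_snoc. destruct Rle_dec; auto. contradiction.
Qed.

Lemma exp_mono a b : a <= b -> exp a <= exp b.
Proof. intros H. destruct (Rle_lt_or_eq_dec _ _ H). left; apply exp_increasing; auto. subst; lra. Qed.

Lemma exp_bound y : y <= 1/2 -> exp (-y - 2*y^2) <= 1 - y.
Proof.
  intros Hy.
  pose proof (exp_ineq1_le (y/(1-y))) as H1.
  assert (E1 : 1 + y/(1-y) = /(1-y)) by (field; lra).
  rewrite E1 in H1.
  assert (H2 : exp (- (y/(1-y))) <= 1 - y).
  { rewrite exp_Ropp. set (z := y/(1-y)) in *. replace (1 - y) with (/ / (1-y)) by (field; lra).
    apply Rinv_le_contravar. apply Rinv_0_lt_compat; lra. exact H1. }
  eapply Rle_trans; [|exact H2]. apply exp_mono.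
  assert (y / (1-y) <= y + 2*y^2).
  { apply Rmult_le_reg_r with (1-y). lra. unfold Rdiv. rewrite Rmult_assoc, Rinv_l by lra.
    nra. }
  lra.
Qed.

Section Growth.
Variables (phi : forecasting_system) (Sl : selection_process) (dl : R) (b : bool) (w : path).
Hypothesis Hdl : 0 < dl <= 1/3.
Let Sk k := b2R (Sl (prefix w k)).
Let dk k := b2R (w k) - cfun phi b (prefix w k).
Let yk k := sgn b * dl * Sk k * dk k.

Lemma growth_exp n : exp (rsum (fun k => - yk k - 2 * (yk k)^2) n) <= prodM (tfactor phi Sl dl b) (prefix w n).
Proof.
  induction n. { cbn [rsum]. rewrite exp_0. unfold prodM; simpl. lra. } cbn [rsum].
  rewrite prefix_S, prodM_snoc, exp_plus.
  assert (E : tfactor phi Sl dl b (prefix w n) (w n) = 1 - yk n) by reflexivity.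
  rewrite E.
  assert (yk n <= 1/2).
  { unfold yk, Sk, dk, sgn, cfun.
    pose proof (lo_ge0 phi (prefix w n)). pose proof (lo_le_hi phi (prefix w n)). pose proof (hi_le1 phi (prefix w n)).
    destruct b, (Sl (prefix w n)), (w n); simpl; nra. }
  pose proof (exp_bound (yk n) H). pose proof (exp_pos (rsum (fun k => - yk k - 2 * (yk k)^2) n)).
  pose proof (exp_pos (- yk n - 2 * yk n ^ 2)).
  apply Rmult_le_compat; lra.
Qed.

Lemma growth_sum n : - sgn b * dl * rsum (fun k => Sk k * dk k) n - 2 * dl^2 * rsum Sk n
   <= rsum (fun k => - yk k - 2 * (yk k)^2) n.
Proof.
  induction n; cbn [rsum]. lra.
  assert (- sgn b * dl * (Sk n * dk n) - 2 * dl^2 * Sk n <= - yk n - 2 * (yk n)^2).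
  { unfold yk.
    assert (Hs : Sk n * Sk n = Sk n) by (unfold Sk; destruct (Sl (prefix w n)); simpl; ring).
    assert (Hg : sgn b * sgn b = 1) by (unfold sgn; destruct b; ring).
    assert (Hd : dk n * dk n <= 1).
    { unfold dk, cfun.
      pose proof (lo_ge0 phi (prefix w n)). pose proof (lo_le_hi phi (prefix w n)). pose proof (hi_le1 phi (prefix w n)).
      destruct b, (w n); simpl; nra. }
    assert (Hs0 : 0 <= Sk n) by (unfold Sk; destruct (Sl (prefix w n)); simpl; lra).
    replace ((sgn b * dl * Sk n * dk n)^2) with (dl^2 * Sk n * (dk n * dk n))
      by (replace (dl^2 * Sk n * (dk n * dk n)) with (dl^2 * (Sk n * Sk n) * (sgn b * sgn b) * (dk n * dk n)) by (rewrite Hs, Hg; ring); ring).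
    assert (0 <= dl^2 * Sk n) by (apply Rmult_le_pos; nra).
    assert (dl^2 * Sk n * (dk n * dk n) <= dl^2 * Sk n) by nra.
    lra. }
  lra.
Qed.

Lemma growth eta : 3 * dl <= eta ->
  is_lim_seq (fun n => rsum Sk n) p_infty ->
  (forall N, exists n, (N <= n)%nat /\ sgn b * (rsum (fun k => Sk k * dk k) n / rsum Sk n) < - eta) ->
  forall K, exists n, K <= prodM (tfactor phi Sl dl b) (prefix w n).
Proof.
  intros Heta Hlim Hfreq K.
  apply is_lim_seq_spec in Hlim. destruct (Hlim (Rmax 1 (K / dl^2))) as [N HN].
  destruct (Hfreq N) as [n [Hn Hr]].
  specialize (HN n Hn).
  exists n. eapply Rle_trans; [|apply growth_exp].
  eapply Rle_trans; [|apply exp_mono, growth_sum].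
  set (Sg := rsum Sk n) in *. set (D := rsum (fun k => Sk k * dk k) n) in *.
  assert (HS1 : 1 < Sg) by (eapply Rle_lt_trans; [apply Rmax_l|exact HN]).
  assert (HSK : K / dl^2 < Sg) by (eapply Rle_lt_trans; [apply Rmax_r|exact HN]).
  assert (HD : sgn b * D < - eta * Sg).
  { unfold Rdiv in Hr. apply Rmult_lt_reg_r with (/ Sg). apply Rinv_0_lt_compat; lra.
    replace (sgn b * D * / Sg) with (sgn b * (D * / Sg)) by ring.
    replace (- eta * Sg * / Sg) with (- eta) by (field; lra). exact Hr. }
  assert (HK : K <= dl^2 * Sg).
  { apply Rmult_lt_compat_l with (r := dl^2) in HSK. 2: nra.
    replace (dl^2 * (K / dl^2)) with K in HSK by (field; lra). lra. }
  pose proof (exp_ineq1_le (- sgn b * dl * D - 2 * dl ^ 2 * Sg)).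
  assert (dl^2 * Sg <= - sgn b * dl * D - 2 * dl ^ 2 * Sg).
  { replace (- sgn b * dl * D) with (- dl * (sgn b * D)) by ring.
    assert (dl * (sgn b * D) <= dl * (- eta * Sg)) by (apply Rmult_le_compat_l; lra).
    assert (3 * dl * (dl * Sg) <= eta * (dl * Sg)) by (apply Rmult_le_compat_r; nra).
    nra. }
  lra.
Qed.
End Growth.

Lemma liminf_freq u : ~ Rbar_le 0 (LimInf_seq u) ->
  exists eta, 0 < eta /\ forall N, exists n, (N <= n)%nat /\ u n < - eta.
Proof.
  intros H. apply NNPP; intro Hc. apply H.
  assert (Hall : forall eta, 0 < eta -> Rbar_le (- eta) (LimInf_seq u)).
  { intros eta Heta. rewrite <- (LimInf_seq_const (-eta)). apply LimInf_le.
    apply NNPP; intro Hne. apply Hc. exists eta; split; auto. intros N.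
    apply NNPP; intro Hn. apply Hne. exists N. intros n Hn'. apply Rnot_lt_le. intro Hlt.
    apply Hn. exists n; split; auto. }
  revert Hall. destruct (LimInf_seq u) as [l| |]; simpl; intros Hall; auto.
  - apply Rnot_lt_le; intro Hl. specialize (Hall (-l/2) ltac:(lra)). simpl in Hall. lra.
  - specialize (Hall 1 ltac:(lra)). simpl in Hall. auto.
Qed.

Lemma limsup_freq u : ~ Rbar_le (LimSup_seq u) 0 ->
  exists eta, 0 < eta /\ forall N, exists n, (N <= n)%nat /\ eta < u n.
Proof.
  intros H. apply NNPP; intro Hc. apply H.
  assert (Hall : forall eta, 0 < eta -> Rbar_le (LimSup_seq u) eta).
  { intros eta Heta. rewrite <- (LimSup_seq_const eta). apply LimSup_le.
    apply NNPP; intro Hne. apply Hc. exists eta; split; auto. intros N.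
    apply NNPP; intro Hn. apply Hne. exists N. intros n Hn'. apply Rnot_lt_le. intro Hlt.
    apply Hn. exists n; split; auto. }
  revert Hall. destruct (LimSup_seq u) as [l| |]; simpl; intros Hall; auto.
  - apply Rnot_lt_le; intro Hl. specialize (Hall (l/2) ltac:(lra)). simpl in Hall. lra.
  - specialize (Hall 1 ltac:(lra)). simpl in Hall. auto.
Qed.

Lemma delta_small eta : 0 < eta -> exists m, 3 * delta_of m <= eta.
Proof.
  intros Heta. destruct (INR_unbounded (3/eta)) as [m Hm]. exists m.
  unfold delta_of. rewrite plus_INR. simpl.
  assert (3 < eta * INR m).
  { apply Rmult_lt_compat_l with (r := eta) in Hm; auto.
    replace (eta * (3/eta)) with 3 in Hm by (field; lra). lra. }
  pose proof (pos_INR m).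
  assert (0 < INR m + (1+1+1)) by lra.
  apply Rmult_le_reg_r with (INR m + (1+1+1)); auto.
  rewrite Rmult_assoc, Rinv_l by lra. nra.
Qed.

Lemma nonrandom_unbounded phi P e (He : forall S, P S -> exists n, e n = Some S) w :
  ~ S_random P phi w -> forall K, exists n, K <= Tsum phi e (prefix w n).
Proof.
  intros Hnr K. apply NNPP; intro Hc. apply Hnr. intros Sl HPS Hlim.
  destruct (He Sl HPS) as [n0 Hn0].
  assert (HselS : selS e n0 = Sl) by (unfold selS; rewrite Hn0; auto).
  split.
  - apply NNPP; intro HA. apply liminf_freq in HA as [eta [Heta Hfreq]].
    destruct (delta_small eta Heta) as [m Hm].
    destruct (test_surj phi e n0 m true) as [i Hi].
    rewrite HselS in Hi.
    assert (Hf : forall N, exists n, (N <= n)%nat /\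
       sgn true * (rsum (fun k => b2R (Sl (prefix w k)) * (b2R (w k) - cfun phi true (prefix w k))) n
         / rsum (fun k => b2R (Sl (prefix w k))) n) < - eta).
    { intros N. destruct (Hfreq N) as [n [Hn1 Hn2]]. exists n. split; auto. cbn [sgn cfun]. lra. }
    destruct (growth phi Sl (delta_of m) true w (delta_of_bounds m) eta Hm Hlim Hf (K / wt i)) as [n Hn].
    apply Hc. exists n. pose proof (Tsum_ge phi e i (prefix w n)) as Hge. rewrite Hi in Hge.
    pose proof (wt_pos i).
    apply Rmult_le_compat_l with (r := wt i) in Hn; [|lra].
    replace (wt i * (K / wt i)) with K in Hn by (field; lra). lra.
  - apply NNPP; intro HA. apply limsup_freq in HA as [eta [Heta Hfreq]].
    destruct (delta_small eta Heta) as [m Hm].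
    destruct (test_surj phi e n0 m false) as [i Hi].
    rewrite HselS in Hi.
    assert (Hf : forall N, exists n, (N <= n)%nat /\
       sgn false * (rsum (fun k => b2R (Sl (prefix w k)) * (b2R (w k) - cfun phi false (prefix w k))) n
         / rsum (fun k => b2R (Sl (prefix w k))) n) < - eta).
    { intros N. destruct (Hfreq N) as [n [Hn1 Hn2]]. exists n. split; auto. cbn [sgn cfun]. lra. }
    destruct (growth phi Sl (delta_of m) false w (delta_of_bounds m) eta Hm Hlim Hf (K / wt i)) as [n Hn].
    apply Hc. exists n. pose proof (Tsum_ge phi e i (prefix w n)) as Hge. rewrite Hi in Hge.
    pose proof (wt_pos i).
    apply Rmult_le_compat_l with (r := wt i) in Hn; [|lra].
    replace (wt i * (K / wt i)) with K in Hn by (field; lra). lra.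
Qed.

Lemma sub_le1 phi M : submartingale phi M ->
  (forall w, Rbar_le (LimSup_seq (fun n => M (prefix w n))) (Finite 1)) -> M nil <= 1.
Proof.
  intros HM HL. apply Rnot_lt_le; intro Hgt.
  set (nxt := fun s : sit => if Rle_dec (M s) (M (s ++ true :: nil)) then true else false).
  assert (Hnxt : forall s, M s <= M (s ++ nxt s :: nil)).
  { intros s. unfold nxt. destruct Rle_dec as [H|H]; auto.
    pose proof (lo_ge0 phi s). pose proof (lo_le_hi phi s). pose proof (hi_le1 phi s).
    specialize (HM s (lo phi s) ltac:(lra)). rewrite E_r_DeltaM in HM.
    apply Rnot_le_lt in H.
    apply Rnot_lt_le; intro H'.
    set (a := lo phi s) in *. set (m1 := M (s ++ true :: nil)) in *. set (m0 := M (s ++ false :: nil)) in *.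
    assert (0 <= a * (M s - m1)) by (apply Rmult_le_pos; lra).
    assert (0 <= (1 - a) * (M s - m0)) by (apply Rmult_le_pos; lra).
    destruct (Rle_lt_or_eq_dec 0 a H0) as [Ha|Ha].
    - assert (0 < a * (M s - m1)) by (apply Rmult_lt_0_compat; lra). nra.
    - rewrite <- Ha in *. nra. }
  set (pre := fix pre (n : nat) : sit := match n with O => nil | S n => pre n ++ nxt (pre n) :: nil end).
  set (w := fun n => nxt (pre n)).
  assert (Hp : forall n, prefix w n = pre n).
  { induction n. reflexivity. rewrite prefix_S, IHn. reflexivity. }
  assert (Hge : forall n, M nil <= M (prefix w n)).
  { induction n. rewrite Hp; apply Rle_refl. rewrite Hp in *. simpl. eapply Rle_trans; [exact IHn|apply Hnxt]. }
  specialize (HL w).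
  assert (Rbar_le (M nil) (LimSup_seq (fun n => M (prefix w n)))).
  { rewrite <- (LimSup_seq_const (M nil)). apply LimSup_le. exists O. intros; auto. }
  pose proof (Rbar_le_trans _ _ _ H HL). simpl in H0. lra.
Qed.

Lemma lower_witness phi P (e : nat -> option selection_process) (He : forall S, P S -> exists n, e n = Some S) eps :
  0 < eps < 1 -> exists M : sit -> R,
     submartingale phi M /\
     (forall w, Rbar_le (LimSup_seq (fun n => M (prefix w n))) (Finite (indicator (S_random P phi) w))) /\
     1 - eps = M nil.
Proof.
  intros Heps.
  set (St := stopM (Tsum phi e) (/ eps)).
  assert (St0 : forall s, 0 <= St s) by (apply stopM_nonneg, Tsum_nonneg).
  exists (fun s => 1 - eps * St s). split; [|split].
  - intros s r Hr. pose proof (stopM_super phi (Tsum phi e) (/eps) (Tsum_super phi e) s r Hr) as H.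
    fold St in H. rewrite E_r_DeltaM in *.
    replace (r * (1 - eps * St (s ++ true :: nil)) + (1 - r) * (1 - eps * St (s ++ false :: nil)) - (1 - eps * St s))
      with (- eps * (r * St (s ++ true :: nil) + (1 - r) * St (s ++ false :: nil) - St s)) by ring.
    nra.
  - intros w. unfold indicator. destruct excluded_middle_informative as [Hr|Hr].
    + rewrite <- (LimSup_seq_const 1). apply LimSup_le. exists O. intros n _.
      specialize (St0 (prefix w n)). nra.
    + destruct (nonrandom_unbounded phi P e He w Hr (/eps)) as [n Hn].
      rewrite <- (LimSup_seq_const 0). apply LimSup_le. exists n. intros m Hm.
      pose proof (stopM_path (Tsum phi e) (/eps) w n Hn m Hm). fold St in H.
      apply Rmult_le_compat_l with (r := eps) in H; [|lra].
      rewrite Rinv_r in H by lra. lra.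
  - unfold St, stopM. simpl. rewrite Tsum_nil. ring.
Qed.

Theorem proposition24 (phi : forecasting_system)
    (P : selection_process -> Prop) (HP : countable_set P) :
  almost_sure phi (S_random P phi).
Proof.
  destruct HP as [e He].
  unfold almost_sure, lower_exp.
  destruct (Lub_Rbar_correct (fun v => exists M : sit -> R,
     submartingale phi M /\
     (forall w, Rbar_le (LimSup_seq (fun n => M (prefix w n))) (Finite (indicator (S_random P phi) w))) /\
     v = M nil)) as [Hub Hleast].
  apply Rbar_le_antisym.
  - apply Hleast. intros x [M [HM [HL Hx]]]. subst x. simpl.
    apply (sub_le1 phi M HM). intros w. eapply Rbar_le_trans; [apply HL|].
    simpl. unfold indicator. destruct excluded_middle_informative; lra.
  - assert (Hw : forall eps, 0 < eps < 1 -> Rbar_le (Finite (1 - eps)) (Lub_Rbar (fun v => exists M : sit -> R,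
     submartingale phi M /\
     (forall w, Rbar_le (LimSup_seq (fun n => M (prefix w n))) (Finite (indicator (S_random P phi) w))) /\
     v = M nil))).
    { intros eps Heps. apply Hub. apply (lower_witness phi P e He eps Heps). }
    revert Hw. destruct Lub_Rbar as [l| |]; simpl; intros Hw; auto.
    + apply Rnot_lt_le; intro Hl.
      assert (Hc : 0 < (1 - l)/2 < 1 \/ 1 <= (1-l)/2) by lra.
      destruct Hc as [Hc|Hc].
      * specialize (Hw _ Hc). simpl in Hw. lra.
      * specialize (Hw (1/2) ltac:(lra)). simpl in Hw. lra.
    + specialize (Hw (1/2) ltac:(lra)). simpl in Hw. auto.
Qed.
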